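(* Let $\mathrm{R}_8=\{a_0,a_1,\dots,a_7\}$ be the dihedral quandle of order $8$, i.e. the set $\mathbb{Z}_8$ with the binary operation $a_i\cdot a_j=a_{(2j-i)\bmod 8}$. Let $\mathbb{Z}[\mathrm{R}_8]$ be its integral quandle ring and $\Delta(\mathrm{R}_8)$ its augmentation ideal. Then \[ \left|\Delta^2(\mathrm{R}_8)/\Delta^3(\mathrm{R}_8)\right| = 16 . \]
   Context: For a quandle $A$, the quandle ring $\mathbb{Z}[A]$ is the free abelian group on $A$, with multiplication defined by bilinear extension of the quandle operation: $\left(\sum_i r_i a_i\right)\cdot\left(\sum_j s_j a_j\right)=\sum_{i,j} r_i s_j (a_i\cdot a_j)$ (this ring is in general non-associative). The augmentation ideal $\Delta(A)$ is the kernel of the augmentation map $\varepsilon:\mathbb{Z}[A]\to\mathbb{Z}$, $\sum_i r_i a_i\mapsto \sum_i r_i$. Its powers are defined by $\Delta^1(A)=\Delta(A)$ and $\Delta^{k+1}(A)=\Delta^k(A)\cdot\Delta(A)$, the additive subgroup of $\mathbb{Z}[A]$ generated by all products $x\cdot y$ with $x\in\Delta^k(A)$, $y\in\Delta(A)$. *)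

(* Defs.v *)
From mathcomp Require Import all_boot all_order all_algebra.
Set Implicit Arguments. Unset Strict Implicit. Unset Printing Implicit Defensive.
Import GRing.Theory.
Local Open Scope ring_scope.

(* The integral quandle ring Z[A] of a finite quandle A with carrier 'I_n:
   the free abelian group on 'I_n, i.e. integer-valued functions on 'I_n
   (element sum_i r_i a_i  <->  the function i |-> r_i). *)
Definition qring (n : nat) := {ffun 'I_n -> int}.

Definition qmul (n : nat) (op : 'I_n -> 'I_n -> 'I_n) (x y : qring n) : qring n :=
  [ffun k => \sum_(i < n) \sum_(j < n) (if op i j == k then x i * y j else 0)].

Definition augm (n : nat) (x : qring n) : int := \sum_(i < n) x i.

Definition aug_ideal (n : nat) (x : qring n) : Prop := augm x = 0.

Inductive zspan (n : nat) (S : qring n -> Prop) : qring n -> Prop :=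
  | zspan0 : zspan S 0
  | zspan_gen x : S x -> zspan S x
  | zspanN x : zspan S x -> zspan S (- x)
  | zspanD x y : zspan S x -> zspan S y -> zspan S (x + y).

Fixpoint aug_pow (n : nat) (op : 'I_n -> 'I_n -> 'I_n) (k : nat) : qring n -> Prop :=
  match k with
  | 0 => fun _ => True
  | 1 => @aug_ideal n
  | k'.+1 => zspan (fun z => exists x y,
               aug_pow op k' x /\ aug_ideal y /\ z = qmul op x y)
  end.

Definition quot_card (n : nat) (H K : qring n -> Prop) (m : nat) : Prop :=
  exists f : 'I_m -> qring n,
    [/\ forall i, H (f i),
        forall i j, K (f i - f j) -> i = j
      & forall x, H x -> exists i, K (x - f i)].

Definition dihedral_op (n : nat) (i j : 'I_n.+1) : 'I_n.+1 :=
  inord ((2 * j + (n.+1 - i)) %% n.+1)%N.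

(* Main.v *)
Require Import Defs.
From mathcomp Require Import all_boot all_order all_algebra zify ring.

Set Implicit Arguments. Unset Strict Implicit. Unset Printing Implicit Defensive.
Import GRing.Theory.
Local Open Scope ring_scope.

Notation dop := (@dihedral_op 7).
Definition cx (x : qring 8) (i : nat) : int := x (inord i).

Lemma op_eq (i j k : 'I_8) :
  (dop i j == k) = (i == inord ((2*j + 8 - k) %% 8)).
Proof.
have hi := ltn_ord i; have hj := ltn_ord j; have hk := ltn_ord k.
apply/eqP/eqP => [h|->]; apply/val_inj; rewrite /dihedral_op /=.
  move: h => /(congr1 val) /=; rewrite !inordK; lia.
rewrite !inordK; lia.
Qed.

Lemma qmulE (x y : qring 8) (k : 'I_8) : qmul dop x y k =
  \sum_(j < 8) x (inord ((2*j + 8 - k) %% 8)) * y j.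
Proof.
rewrite ffunE exchange_big /=; apply: eq_bigr => j _.
rewrite (bigD1 (inord ((2*j+8-k)%%8))) //= op_eq eqxx big1 ?addr0 //.
by move=> i /negbTE ne; rewrite op_eq ne.
Qed.

Lemma qmul_nat (x y : qring 8) (k : nat) : (k < 8)%N -> qmul dop x y (inord k) =
  \sum_(0 <= j < 8) cx x ((2*j + 8 - k) %% 8) * cx y j.
Proof.
move=> hk; rewrite qmulE big_mkord inordK //; apply: eq_bigr => j _.
by rewrite /cx inord_val.
Qed.
Lemma qmul0 x y : cx (qmul dop x y) 0 = cx x 0 * cx y 0 + (cx x 2 * cx y 1 + (cx x 4 * cx y 2 + (cx x 6 * cx y 3 + (cx x 0 * cx y 4 + (cx x 2 * cx y 5 + (cx x 4 * cx y 6 + (cx x 6 * cx y 7 + 0))))))).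
Proof. by rewrite [LHS]/cx qmul_nat // !big_nat_recl // big_geq. Qed.
Lemma qmul1 x y : cx (qmul dop x y) 1 = cx x 7 * cx y 0 + (cx x 1 * cx y 1 + (cx x 3 * cx y 2 + (cx x 5 * cx y 3 + (cx x 7 * cx y 4 + (cx x 1 * cx y 5 + (cx x 3 * cx y 6 + (cx x 5 * cx y 7 + 0))))))).
Proof. by rewrite [LHS]/cx qmul_nat // !big_nat_recl // big_geq. Qed.
Lemma qmul2 x y : cx (qmul dop x y) 2 = cx x 6 * cx y 0 + (cx x 0 * cx y 1 + (cx x 2 * cx y 2 + (cx x 4 * cx y 3 + (cx x 6 * cx y 4 + (cx x 0 * cx y 5 + (cx x 2 * cx y 6 + (cx x 4 * cx y 7 + 0))))))).
Proof. by rewrite [LHS]/cx qmul_nat // !big_nat_recl // big_geq. Qed.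
Lemma qmul3 x y : cx (qmul dop x y) 3 = cx x 5 * cx y 0 + (cx x 7 * cx y 1 + (cx x 1 * cx y 2 + (cx x 3 * cx y 3 + (cx x 5 * cx y 4 + (cx x 7 * cx y 5 + (cx x 1 * cx y 6 + (cx x 3 * cx y 7 + 0))))))).
Proof. by rewrite [LHS]/cx qmul_nat // !big_nat_recl // big_geq. Qed.
Lemma qmul4 x y : cx (qmul dop x y) 4 = cx x 4 * cx y 0 + (cx x 6 * cx y 1 + (cx x 0 * cx y 2 + (cx x 2 * cx y 3 + (cx x 4 * cx y 4 + (cx x 6 * cx y 5 + (cx x 0 * cx y 6 + (cx x 2 * cx y 7 + 0))))))).
Proof. by rewrite [LHS]/cx qmul_nat // !big_nat_recl // big_geq. Qed.
Lemma qmul5 x y : cx (qmul dop x y) 5 = cx x 3 * cx y 0 + (cx x 5 * cx y 1 + (cx x 7 * cx y 2 + (cx x 1 * cx y 3 + (cx x 3 * cx y 4 + (cx x 5 * cx y 5 + (cx x 7 * cx y 6 + (cx x 1 * cx y 7 + 0))))))).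
Proof. by rewrite [LHS]/cx qmul_nat // !big_nat_recl // big_geq. Qed.
Lemma qmul6 x y : cx (qmul dop x y) 6 = cx x 2 * cx y 0 + (cx x 4 * cx y 1 + (cx x 6 * cx y 2 + (cx x 0 * cx y 3 + (cx x 2 * cx y 4 + (cx x 4 * cx y 5 + (cx x 6 * cx y 6 + (cx x 0 * cx y 7 + 0))))))).
Proof. by rewrite [LHS]/cx qmul_nat // !big_nat_recl // big_geq. Qed.
Lemma qmul7 x y : cx (qmul dop x y) 7 = cx x 1 * cx y 0 + (cx x 3 * cx y 1 + (cx x 5 * cx y 2 + (cx x 7 * cx y 3 + (cx x 1 * cx y 4 + (cx x 3 * cx y 5 + (cx x 5 * cx y 6 + (cx x 7 * cx y 7 + 0))))))).
Proof. by rewrite [LHS]/cx qmul_nat // !big_nat_recl // big_geq. Qed.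

Lemma augm8 x : augm x = cx x 0 + (cx x 1 + (cx x 2 + (cx x 3 + (cx x 4 + (cx x 5 + (cx x 6 + (cx x 7 + 0))))))).
Proof.
rewrite /augm (eq_bigr (fun i : 'I_8 => cx x i)); last by move=> i _; rewrite /cx inord_val.
by rewrite -(big_mkord xpredT (cx x)) !big_nat_recl // big_geq.
Qed.

Definition vec (s : seq int) : qring 8 := [ffun i : 'I_8 => nth 0 s i].

Lemma cx_vec s i : (i < 8)%N -> cx (vec s) i = nth 0 s i.
Proof. by move=> hi; rewrite /cx ffunE inordK. Qed.
Lemma cxD x y i : cx (x + y) i = cx x i + cx y i.
Proof. by rewrite /cx ffunE. Qed.
Lemma cxN x i : cx (- x) i = - cx x i.
Proof. by rewrite /cx ffunE. Qed.
Lemma cxB x y i : cx (x - y) i = cx x i - cx y i.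
Proof. by rewrite cxD cxN. Qed.
Lemma cx0 i : cx 0 i = 0.
Proof. by rewrite /cx ffunE. Qed.
Lemma cxZ x z i : cx (x *~ z) i = cx x i * z.
Proof. by rewrite /cx ffunMzE mulrzz. Qed.

Lemma eq8 x y : cx x 0 = cx y 0 -> cx x 1 = cx y 1 -> cx x 2 = cx y 2 ->
  cx x 3 = cx y 3 -> cx x 4 = cx y 4 -> cx x 5 = cx y 5 -> cx x 6 = cx y 6 ->
  cx x 7 = cx y 7 -> x = y.
Proof.
move=> h0 h1 h2 h3 h4 h5 h6 h7; apply/ffunP => k.
have [m hm ->] : exists2 m, (m < 8)%N & k = inord m by exists (val k); [exact: ltn_ord | rewrite inord_val].
by case: m hm => [|[|[|[|[|[|[|[|//]]]]]]]] _.
Qed.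

Lemma modP (m a w : int) : a = m * w -> ((a %% m)%Z == 0).
Proof. by move=> ->; rewrite mulrC modzMl. Qed.

Lemma zspanZ n (S : qring n -> Prop) x z : zspan S x -> zspan S (x *~ z).
Proof.
move=> hx.
have hn : forall k : nat, zspan S (x *+ k).
  elim=> [|k ih]; first by rewrite mulr0n; apply: zspan0.
  by rewrite mulrS; apply: zspanD.
by case: z => k; rewrite ?NegzE ?mulrNz; [apply: hn | apply: zspanN; apply: hn].
Qed.

Definition P2 (x : qring 8) : bool :=
  [&& cx x 0 + cx x 2 + cx x 4 + cx x 6 == 0,
      cx x 0 + cx x 1 + cx x 2 + cx x 3 + cx x 4 + cx x 5 + cx x 6 + cx x 7 == 0 &
      ((cx x 5 - cx x 0 - cx x 1 - 2 * cx x 2 - 2 * cx x 3 - 3 * cx x 4) %% 4)%Z == 0].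

Definition P3 (x : qring 8) : bool :=
  [&& cx x 0 + cx x 2 + cx x 4 + cx x 6 == 0,
      cx x 0 + cx x 1 + cx x 2 + cx x 3 + cx x 4 + cx x 5 + cx x 6 + cx x 7 == 0,
      ((cx x 3 - cx x 0 - cx x 1 - cx x 2) %% 2)%Z == 0,
      ((cx x 4 - cx x 0 - 2 * cx x 2) %% 4)%Z == 0 &
      ((cx x 5 - cx x 0 - 3 * cx x 1 - 4 * cx x 2 - cx x 4) %% 8)%Z == 0].

Lemma P2_gen u v : augm u = 0 -> augm v = 0 -> P2 (qmul dop u v).
Proof.
rewrite !augm8 /P2 !qmul0 !qmul1 !qmul2 !qmul3 !qmul4 !qmul5 !qmul6 !qmul7.
move: (cx u 0) (cx u 1) (cx u 2) (cx u 3) (cx u 4) (cx u 5) (cx u 6) (cx u 7)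
  (cx v 0) (cx v 1) (cx v 2) (cx v 3) (cx v 4) (cx v 5) (cx v 6) (cx v 7)
  => u0 u1 u2 u3 u4 u5 u6 u7 v0 v1 v2 v3 v4 v5 v6 v7 hu hv.
have -> : u0 = - (u1 + u2 + u3 + u4 + u5 + u6 + u7) by lia.
have -> : v0 = - (v1 + v2 + v3 + v4 + v5 + v6 + v7) by lia.
apply/and3P; split; [apply/eqP; ring | apply/eqP; ring |].
apply: (modP (w := (-1) * u2 * v3 + (-1) * u2 * v7 + (-1) * u3 * v3 + (-1) * u3 * v7 + (1) * u4 * v1 + (1) * u4 * v2 + (1) * u4 * v5 + (1) * u4 * v6 + (1) * u5 * v1 + (1) * u5 * v2 + (1) * u5 * v5 + (1) * u5 * v6 + (1) * u6 * v2 + (1) * u6 * v6 + (1) * u7 * v2 + (1) * u7 * v6)); ring.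
Qed.

Lemma P3_gen x y : P2 x -> augm y = 0 -> P3 (qmul dop x y).
Proof.
rewrite !augm8 /P2 /P3 !qmul0 !qmul1 !qmul2 !qmul3 !qmul4 !qmul5 !qmul6 !qmul7.
move: (cx x 0) (cx x 1) (cx x 2) (cx x 3) (cx x 4) (cx x 5) (cx x 6) (cx x 7)
  (cx y 0) (cx y 1) (cx y 2) (cx y 3) (cx y 4) (cx y 5) (cx y 6) (cx y 7)
  => x0 x1 x2 x3 x4 x5 x6 x7 y0 y1 y2 y3 y4 y5 y6 y7 /and3P[/eqP h1 /eqP h2 h3] hy.
have e5 : x5 = x0 + x1 + 2 * x2 + 2 * x3 + 3 * x4 + 4 * ((x5 - x0 - x1 - 2 * x2 - 2 * x3 - 3 * x4) %/ 4)%Z by lia.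
move: ((x5 - x0 - x1 - 2 * x2 - 2 * x3 - 3 * x4) %/ 4)%Z e5 => q e5.
have e7 : x7 = - (x0 + x1 + x2 + x3 + x4 + x5 + x6) by lia.
have e6 : x6 = - (x0 + x2 + x4) by lia.
have e0 : y0 = - (y1 + y2 + y3 + y4 + y5 + y6 + y7) by lia.
subst x7 x6 x5 y0.
apply/and5P; split; [apply/eqP; ring | apply/eqP; ring | | |].
- apply: (modP (w := (-6) * q * y1 + (-4) * q * y2 + (-6) * q * y3 + (-6) * q * y5 + (-4) * q * y6 + (-6) * q * y7 + (-2) * x0 * y1 + (-1) * x0 * y2 + (-1) * x0 * y3 + (-2) * x0 * y5 + (-1) * x0 * y6 + (-1) * x0 * y7 + (-3) * x1 * y1 + (-1) * x1 * y2 + (-2) * x1 * y3 + (-3) * x1 * y5 + (-1) * x1 * y6 + (-2) * x1 * y7 + (-4) * x2 * y1 + (-3) * x2 * y2 + (-3) * x2 * y3 + (-4) * x2 * y5 + (-3) * x2 * y6 + (-3) * x2 * y7 + (-4) * x3 * y1 + (-3) * x3 * y2 + (-3) * x3 * y3 + (-4) * x3 * y5 + (-3) * x3 * y6 + (-3) * x3 * y7 + (-5) * x4 * y1 + (-4) * x4 * y2 + (-5) * x4 * y3 + (-5) * x4 * y5 + (-4) * x4 * y6 + (-5) * x4 * y7)); ring.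
- apply: (modP (w := (-1) * x0 * y1 + (-1) * x0 * y5 + (-1) * x2 * y1 + (-1) * x2 * y2 + (-1) * x2 * y5 + (-1) * x2 * y6 + (-1) * x4 * y1 + (-1) * x4 * y2 + (-1) * x4 * y3 + (-1) * x4 * y5 + (-1) * x4 * y6 + (-1) * x4 * y7)); ring.
- apply: (modP (w := (-1) * q * y1 + (-2) * q * y2 + (-3) * q * y3 + (-1) * q * y5 + (-2) * q * y6 + (-3) * q * y7 + (-1) * x0 * y1 + (-1) * x0 * y2 + (-1) * x0 * y3 + (-1) * x0 * y5 + (-1) * x0 * y6 + (-1) * x0 * y7 + (-1) * x1 * y1 + (-1) * x1 * y2 + (-1) * x1 * y3 + (-1) * x1 * y5 + (-1) * x1 * y6 + (-1) * x1 * y7 + (-1) * x2 * y1 + (-2) * x2 * y2 + (-2) * x2 * y3 + (-1) * x2 * y5 + (-2) * x2 * y6 + (-2) * x2 * y7 + (-1) * x3 * y1 + (-2) * x3 * y2 + (-2) * x3 * y3 + (-1) * x3 * y5 + (-2) * x3 * y6 + (-2) * x3 * y7 + (-1) * x4 * y1 + (-2) * x4 * y2 + (-3) * x4 * y3 + (-1) * x4 * y5 + (-2) * x4 * y6 + (-3) * x4 * y7)); ring.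
Qed.

Lemma P2_0 : P2 0.
Proof. by rewrite /P2 !cx0. Qed.
Lemma P2N x : P2 x -> P2 (- x).
Proof. rewrite /P2 !cxN; lia. Qed.
Lemma P2D x y : P2 x -> P2 y -> P2 (x + y).
Proof. rewrite /P2 !cxD; lia. Qed.
Lemma P3_0 : P3 0.
Proof. by rewrite /P3 !cx0. Qed.
Lemma P3N x : P3 x -> P3 (- x).
Proof. rewrite /P3 !cxN; lia. Qed.
Lemma P3D x y : P3 x -> P3 y -> P3 (x + y).
Proof. rewrite /P3 !cxD; lia. Qed.

Lemma aug2_P2 x : aug_pow dop 2 x -> P2 x.
Proof.
elim=> [|z [u [v [hu [hv ->]]]]|y _ /P2N|y1 y2 _ h1 _ h2] //; first exact: P2_0.
  exact: P2_gen.
exact: P2D.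
Qed.

Lemma aug3_P3 x : aug_pow dop 3 x -> P3 x.
Proof.
elim=> [|z [u [v [hu [hv ->]]]]|y _ /P3N|y1 y2 _ h1 _ h2] //; first exact: P3_0.
  exact: P3_gen (aug2_P2 hu) hv.
exact: P3D.
Qed.

Ltac qsimp := rewrite ?qmul0 ?qmul1 ?qmul2 ?qmul3 ?qmul4 ?qmul5 ?qmul6 ?qmul7.

Definition e1 := vec [:: -1; 1; 0; 0; 0; 0; 0; 0].
Definition e2 := vec [:: -1; 0; 1; 0; 0; 0; 0; 0].
Definition e3 := vec [:: -1; 0; 0; 1; 0; 0; 0; 0].
Definition e7 := vec [:: -1; 0; 0; 0; 0; 0; 0; 1].

Lemma aug_e1 : aug_ideal e1. Proof. by rewrite /aug_ideal augm8 !cx_vec. Qed.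
Lemma aug_e2 : aug_ideal e2. Proof. by rewrite /aug_ideal augm8 !cx_vec. Qed.
Lemma aug_e3 : aug_ideal e3. Proof. by rewrite /aug_ideal augm8 !cx_vec. Qed.
Lemma aug_e7 : aug_ideal e7. Proof. by rewrite /aug_ideal augm8 !cx_vec. Qed.

Lemma mem2 u v : aug_ideal u -> aug_ideal v -> aug_pow dop 2 (qmul dop u v).
Proof. by move=> hu hv; apply: zspan_gen; exists u, v. Qed.
Lemma mem3 u v w : aug_ideal u -> aug_ideal v -> aug_ideal w ->
  aug_pow dop 3 (qmul dop (qmul dop u v) w).
Proof. by move=> hu hv hw; apply: zspan_gen; exists (qmul dop u v), w; split => //; apply: mem2. Qed.

Definition T112 := qmul dop (qmul dop e1 e1) e2.
Definition T113 := qmul dop (qmul dop e1 e1) e3.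
Definition T121 := qmul dop (qmul dop e1 e2) e1.
Definition T222 := qmul dop (qmul dop e2 e2) e2.
Definition T231 := qmul dop (qmul dop e2 e3) e1.
Definition T712 := qmul dop (qmul dop e7 e1) e2.

Lemma T112E : T112 = vec [:: -1; 1; -1; 1; 1; -1; 1; -1].
Proof. apply: eq8; rewrite /T112; qsimp; qsimp; by rewrite !cx_vec. Qed.
Lemma T113E : T113 = vec [:: -1; 1; 0; 0; -1; 1; 2; -2].
Proof. apply: eq8; rewrite /T113; qsimp; qsimp; by rewrite !cx_vec. Qed.
Lemma T121E : T121 = vec [:: -1; 1; 1; -1; 1; -1; -1; 1].
Proof. apply: eq8; rewrite /T121; qsimp; qsimp; by rewrite !cx_vec. Qed.
Lemma T222E : T222 = vec [:: -2; 0; 2; 0; 2; 0; -2; 0].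
Proof. apply: eq8; rewrite /T222; qsimp; qsimp; by rewrite !cx_vec. Qed.
Lemma T231E : T231 = vec [:: -1; 0; 3; 0; -3; 0; 1; 0].
Proof. apply: eq8; rewrite /T231; qsimp; qsimp; by rewrite !cx_vec. Qed.
Lemma T712E : T712 = vec [:: -1; 1; -1; -1; 1; -1; 1; 1].
Proof. apply: eq8; rewrite /T712; qsimp; qsimp; by rewrite !cx_vec. Qed.

Lemma P3_aug3 x : P3 x -> aug_pow dop 3 x.
Proof.
rewrite /P3 => h.
set k4 := ((cx x 3 - cx x 0 - cx x 1 - cx x 2) %/ 2)%Z.
set k5 := ((cx x 4 - cx x 0 - 2 * cx x 2) %/ 4)%Z.
set k6 := ((cx x 5 - cx x 0 - 3 * cx x 1 - 4 * cx x 2 - cx x 4) %/ 8)%Z.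
have -> : x = T112 *~ (- cx x 2 + k4 - k5 - 2 * k6)
   + T113 *~ (cx x 0 + 2 * cx x 1 + 3 * cx x 2 + 2 * k5 + 4 * k6)
   + T121 *~ (cx x 0 + cx x 1 + cx x 2 + k5)
   + T222 *~ (cx x 2 + k5 + k6)
   + T231 *~ (- cx x 0 - cx x 1 - 2 * cx x 2 - 2 * k5 - 2 * k6)
   + T712 *~ (- 2 * cx x 0 - 2 * cx x 1 - 3 * cx x 2 - k4 - 2 * k5 - 2 * k6).
  apply: eq8; rewrite !cxD !cxZ T112E T113E T121E T222E T231E T712E !cx_vec //=;
  rewrite /k4 /k5 /k6; lia.
have m3 := mem3.
repeat apply: zspanD; apply: zspanZ;
  rewrite /T112 /T113 /T121 /T222 /T231 /T712;
  apply: mem3; by [apply: aug_e1 | apply: aug_e2 | apply: aug_e3 | apply: aug_e7].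
Qed.

Definition r4 := qmul dop e1 e1 + qmul dop e1 e2 - qmul dop e3 e1 - qmul dop e3 e2.
Definition r5 := qmul dop e1 e1 + qmul dop e1 e3 - qmul dop e3 e1 - qmul dop e3 e2.

Lemma r4E : r4 = vec [:: 0; 0; 0; 1; 0; 2; 0; -3].
Proof. apply: eq8; rewrite /r4 !cxB !cxD; qsimp; by rewrite !cx_vec. Qed.
Lemma r5E : r5 = vec [:: 0; 0; 0; 0; 1; 3; -1; -3].
Proof. apply: eq8; rewrite /r5 !cxB !cxD; qsimp; by rewrite !cx_vec. Qed.

Lemma r4mem : aug_pow dop 2 r4.
Proof.
rewrite /r4; repeat apply: zspanD; try apply: zspanN;
  apply: mem2; by [apply: aug_e1 | apply: aug_e2 | apply: aug_e3].
Qed.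
Lemma r5mem : aug_pow dop 2 r5.
Proof.
rewrite /r5; repeat apply: zspanD; try apply: zspanN;
  apply: mem2; by [apply: aug_e1 | apply: aug_e2 | apply: aug_e3].
Qed.

Definition frep (i : 'I_16) : qring 8 :=
  r4 *~ Posz (i %/ 4)%N + r5 *~ Posz (i %% 4)%N.

Theorem theorem2p1 :
  quot_card (aug_pow (@dihedral_op 7) 2) (aug_pow (@dihedral_op 7) 3) 16.
Proof.
exists frep; split.
- move=> i; apply: zspanD; apply: zspanZ; [exact: r4mem | exact: r5mem].
- move=> i j /aug3_P3; rewrite /P3 /frep !cxB !cxD !cxZ r4E r5E !cx_vec //= => h.
  apply/val_inj => /=; move: h (ltn_ord i) (ltn_ord j); lia.
- move=> x /aug2_P2; rewrite /P2 => h.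
  set E := (cx x 5 - cx x 0 - cx x 1 - 2 * cx x 2 - 2 * cx x 3 - 3 * cx x 4).
  set a := ((cx x 0 - cx x 1 + cx x 2 + cx x 3 + (E %/ 2)%Z) %% 4)%Z.
  set b := ((- cx x 0 - 2 * cx x 2 + cx x 4) %% 4)%Z.
  have hi : (4 * absz a + absz b < 16)%N by rewrite /a /b; lia.
  exists (Ordinal hi); apply: P3_aug3.
  rewrite /P3 /frep !cxB !cxD !cxZ r4E r5E !cx_vec //=.
  move: h; rewrite /E /a /b; lia.
Qed.
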